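(* Let $\mathbf{L}$ be an intermediate propositional logic and let $\mathbf{QL}$ be an intermediate predicate logic. For all formulas $A(x)$ and $B$ with $x$ not free in $B$: (1) the $\varepsilon\tau$-translations $(\mathit{CD})^{\varepsilon\tau}$, $(Q_\exists)^{\varepsilon\tau}$ and $(Q_\forall)^{\varepsilon\tau}$ are provable in the $\varepsilon\tau$-calculus $\varepsilon\tau(\mathbf{L})$; (2) the formulas $\mathit{CD}$, $Q_\exists$ and $Q_\forall$ themselves are provable in the extended calculus $\varepsilon\tau^+(\mathbf{QL})$, where $\mathit{CD}$: $\forall x(A(x)\lor B)\to(\forall x\,A(x)\lor B)$; $Q_\exists$: $(B\to\exists x\,A(x))\to\exists x(B\to A(x))$; $Q_\forall$: $(\forall x\,A(x)\to B)\to\exists x(A(x)\to B)$.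
   Context: An intermediate propositional logic is a set of propositional formulas containing intuitionistic propositional logic, contained in classical propositional logic, and closed under modus ponens and substitution. An intermediate predicate logic is a set of first-order formulas containing intuitionistic predicate logic, contained in classical predicate logic, closed under substitution, modus ponens and the quantifier rules ''from $B\to A(x)$ infer $B\to\forall y\,A(y)$'' and ''from $A(x)\to B$ infer $\exists y\,A(y)\to B$'' ($x$ not free in the conclusion). $\varepsilon\tau$-terms: for any formula $A(x)$ with $x$ free, $\varepsilon x\,A(x)$ and $\tau x\,A(x)$ are terms (terms are identified up to renaming of bound variables; substitution renames bound variables to avoid clashes). Critical formulas are all formulas $A(t)\to A(\varepsilon x\,A(x))$ and $A(\tau x\,A(x))\to A(t)$, $t$ any term. $\varepsilon\tau(\mathbf{L})$: the quantifier-free language with predicate symbols, function symbols and $\varepsilon\tau$-terms (formulas inside $\varepsilon\tau$-terms also quantifier-free); $\vdash_{\varepsilon\tau(\mathbf{L})}B$ means there is a finite sequence of formulas ending in $B$ each of which is a substitution instance of a formula of $\mathbf{L}$, a critical formula, or follows from earlier ones by modus ponens. $\varepsilon\tau^+(\mathbf{QL})$: the full first-order language with quantifiers extended by $\varepsilon\tau$-terms (built from arbitrary formulas) and critical formulas; provability means derivability in $\mathbf{QL}$ (its axioms, modus ponens, quantifier rules) from critical formulas. The $\varepsilon\tau$-translation $A^{\varepsilon\tau}$: identity on atomic formulas, commutes with $\land,\lor,\to,\lnot$, $(\exists x\,A(x))^{\varepsilon\tau}=A^{\varepsilon\tau}(\varepsilon x\,A^{\varepsilon\tau}(x))$, $(\forall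 x\,A(x))^{\varepsilon\tau}=A^{\varepsilon\tau}(\tau x\,A^{\varepsilon\tau}(x))$. *)

(* Defs.v *)
(* Syntax of first-order logic extended by epsilon/tau terms,
   with de Bruijn indices (terms identified up to renaming of bound variables). *)
From Stdlib Require Import List Arith.
Import ListNotations.

Inductive pform : Type :=
| PVar : nat -> pform
| PBot : pform
| PNeg : pform -> pform
| PAnd : pform -> pform -> pform
| POr  : pform -> pform -> pform
| PImp : pform -> pform -> pform.

Fixpoint psub (s : nat -> pform) (p : pform) : pform :=
  match p with
  | PVar n => s n
  | PBot => PBot
  | PNeg a => PNeg (psub s a)
  | PAnd a b => PAnd (psub s a) (psub s b)
  | POr a b => POr (psub s a) (psub s b)
  | PImp a b => PImp (psub s a) (psub s b)
  end.

Fixpoint peval (v : nat -> bool) (p : pform) : bool :=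
  match p with
  | PVar n => v n
  | PBot => false
  | PNeg a => negb (peval v a)
  | PAnd a b => peval v a && peval v b
  | POr a b => peval v a || peval v b
  | PImp a b => implb (peval v a) (peval v b)
  end.

Definition CPC (p : pform) : Prop := forall v, peval v p = true.

Inductive IPC : pform -> Prop :=
| ipc_k a b : IPC (PImp a (PImp b a))
| ipc_s a b c : IPC (PImp (PImp a (PImp b c)) (PImp (PImp a b) (PImp a c)))
| ipc_and1 a b : IPC (PImp (PAnd a b) a)
| ipc_and2 a b : IPC (PImp (PAnd a b) b)
| ipc_andI a b : IPC (PImp a (PImp b (PAnd a b)))
| ipc_or1 a b : IPC (PImp a (POr a b))
| ipc_or2 a b : IPC (PImp b (POr a b))
| ipc_orE a b c : IPC (PImp (PImp a c) (PImp (PImp b c) (PImp (POr a b) c)))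
| ipc_bot a : IPC (PImp PBot a)
| ipc_neg1 a : IPC (PImp (PImp a PBot) (PNeg a))
| ipc_neg2 a : IPC (PImp (PNeg a) (PImp a PBot))
| ipc_mp a b : IPC a -> IPC (PImp a b) -> IPC b.

Definition IntermediatePropLogic (L : pform -> Prop) : Prop :=
  (forall p, IPC p -> L p) /\
  (forall p, L p -> CPC p) /\
  (forall a b, L a -> L (PImp a b) -> L b) /\
  (forall s p, L p -> L (psub s p)).

(* Predicate and function symbols are named by nat; a symbol is the pair
   (name, arity), the arity being the length of the argument list. *)
Inductive term : Type :=
| Var : nat -> term
| Fn  : nat -> list term -> term
| Eps : form -> term      (* eps x A(x), x = de Bruijn index 0 of A *)
| Tau : form -> term
with form : Type :=
| Atom : nat -> list term -> form
| Bot  : form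
| Neg  : form -> form
| And  : form -> form -> form
| Or   : form -> form -> form
| Imp  : form -> form -> form
| All  : form -> form
| Ex   : form -> form.

Definition upren (xi : nat -> nat) : nat -> nat :=
  fun n => match n with 0 => 0 | S k => S (xi k) end.

Fixpoint tren (xi : nat -> nat) (t : term) : term :=
  match t with
  | Var n => Var (xi n)
  | Fn f ts => Fn f (map (tren xi) ts)
  | Eps A => Eps (fren (upren xi) A)
  | Tau A => Tau (fren (upren xi) A)
  end
with fren (xi : nat -> nat) (A : form) : form :=
  match A with
  | Atom p ts => Atom p (map (tren xi) ts)
  | Bot => Bot
  | Neg B => Neg (fren xi B)
  | And B C => And (fren xi B) (fren xi C)
  | Or B C => Or (fren xi B) (fren xi C)
  | Imp B C => Imp (fren xi B) (fren xi C)
  | All B => All (fren (upren xi) B)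
  | Ex B => Ex (fren (upren xi) B)
  end.

Definition tlift (t : term) : term := tren S t.
(* flift B: B placed under one more binder (the new variable is not free in it) *)
Definition flift (B : form) : form := fren S B.

Definition up (sg : nat -> term) : nat -> term :=
  fun n => match n with 0 => Var 0 | S k => tlift (sg k) end.

Fixpoint tsubst (sg : nat -> term) (t : term) : term :=
  match t with
  | Var n => sg n
  | Fn f ts => Fn f (map (tsubst sg) ts)
  | Eps A => Eps (fsubst (up sg) A)
  | Tau A => Tau (fsubst (up sg) A)
  end
with fsubst (sg : nat -> term) (A : form) : form :=
  match A with
  | Atom p ts => Atom p (map (tsubst sg) ts)
  | Bot => Bot
  | Neg B => Neg (fsubst sg B)
  | And B C => And (fsubst sg B) (fsubst sg C)
  | Or B C => Or (fsubst sg B) (fsubst sg C)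
  | Imp B C => Imp (fsubst sg B) (fsubst sg C)
  | All B => All (fsubst (up sg) B)
  | Ex B => Ex (fsubst (up sg) B)
  end.

Definition scons0 (t : term) : nat -> term :=
  fun n => match n with 0 => t | S k => Var k end.

(* inst0 t A = A(t), where A = A(x) with x the de Bruijn index 0 *)
Definition inst0 (t : term) (A : form) : form := fsubst (scons0 t) A.

(* Predicate substitution: sg p n is the formula substituted for the n-ary
   predicate symbol p; its free variables 0..n-1 stand for the arguments and
   its free variables n+k are parameters (free variable k of the whole
   formula).  d = number of binders passed. *)
Definition argsub (d : nat) (ts : list term) : nat -> term :=
  fun i => if i <? length ts then nth i ts (Var 0)
           else Var (i - length ts + d).

Fixpoint tpsub (sg : nat -> nat -> form) (d : nat) (t : term) : term :=
  match t with
  | Var n => Var n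
  | Fn f ts => Fn f (map (tpsub sg d) ts)
  | Eps A => Eps (fpsub sg (S d) A)
  | Tau A => Tau (fpsub sg (S d) A)
  end
with fpsub (sg : nat -> nat -> form) (d : nat) (A : form) : form :=
  match A with
  | Atom p ts => fsubst (argsub d (map (tpsub sg d) ts)) (sg p (length ts))
  | Bot => Bot
  | Neg B => Neg (fpsub sg d B)
  | And B C => And (fpsub sg d B) (fpsub sg d C)
  | Or B C => Or (fpsub sg d B) (fpsub sg d C)
  | Imp B C => Imp (fpsub sg d B) (fpsub sg d C)
  | All B => All (fpsub sg (S d) B)
  | Ex B => Ex (fpsub sg (S d) B)
  end.

Fixpoint tefree (t : term) : Prop :=
  match t with
  | Var _ => True
  | Fn _ ts => (fix go (l : list term) : Prop :=
                  match l with [] => True | u :: l' => tefree u /\ go l' end) ts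
  | Eps _ => False
  | Tau _ => False
  end.
Fixpoint fefree (A : form) : Prop :=
  match A with
  | Atom _ ts => (fix go (l : list term) : Prop :=
                  match l with [] => True | u :: l' => tefree u /\ go l' end) ts
  | Bot => True
  | Neg B => fefree B
  | And B C | Or B C | Imp B C => fefree B /\ fefree C
  | All B | Ex B => fefree B
  end.

Fixpoint tqf (t : term) : Prop :=
  match t with
  | Var _ => True
  | Fn _ ts => (fix go (l : list term) : Prop :=
                  match l with [] => True | u :: l' => tqf u /\ go l' end) ts
  | Eps A => fqf A
  | Tau A => fqf A
  end
with fqf (A : form) : Prop :=
  match A with
  | Atom _ ts => (fix go (l : list term) : Prop :=
                  match l with [] => True | u :: l' => tqf u /\ go l' end) ts
  | Bot => True
  | Neg B => fqf B
  | And B C | Or B C | Imp B C => fqf B /\ fqf C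
  | All _ | Ex _ => False
  end.

(* MP and the two quantifier rules; the condition "x not free in the
   conclusion" is expressed by the de Bruijn lifting of B. *)
Inductive HDer (Ax : form -> Prop) : form -> Prop :=
| hd_ax F : Ax F -> HDer Ax F
| hd_mp A B : HDer Ax A -> HDer Ax (Imp A B) -> HDer Ax B
| hd_all B A : HDer Ax (Imp (flift B) A) -> HDer Ax (Imp B (All A))
| hd_ex A B : HDer Ax (Imp A (flift B)) -> HDer Ax (Imp (Ex A) B).

Inductive IntAx : form -> Prop :=
| ax_k A B : IntAx (Imp A (Imp B A))
| ax_s A B C : IntAx (Imp (Imp A (Imp B C)) (Imp (Imp A B) (Imp A C)))
| ax_and1 A B : IntAx (Imp (And A B) A)
| ax_and2 A B : IntAx (Imp (And A B) B)
| ax_andI A B : IntAx (Imp A (Imp B (And A B)))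
| ax_or1 A B : IntAx (Imp A (Or A B))
| ax_or2 A B : IntAx (Imp B (Or A B))
| ax_orE A B C : IntAx (Imp (Imp A C) (Imp (Imp B C) (Imp (Or A B) C)))
| ax_bot A : IntAx (Imp Bot A)
| ax_neg1 A : IntAx (Imp (Imp A Bot) (Neg A))
| ax_neg2 A : IntAx (Imp (Neg A) (Imp A Bot))
| ax_all A t : IntAx (Imp (All A) (inst0 t A))
| ax_ex A t : IntAx (Imp (inst0 t A) (Ex A)).

Definition ClAx (F : form) : Prop := IntAx F \/ exists A, F = Or A (Neg A).

Definition IQC (F : form) : Prop := HDer (fun G => fefree G /\ IntAx G) F.
Definition CQC (F : form) : Prop := HDer (fun G => fefree G /\ ClAx G) F.

Definition IntermediatePredLogic (QL : form -> Prop) : Prop :=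
  (forall F, QL F -> fefree F) /\
  (forall F, IQC F -> QL F) /\
  (forall F, QL F -> CQC F) /\
  (forall sg F, (forall p n, fefree (sg p n)) -> QL F -> QL (fpsub sg 0 F)) /\
  (forall A B, QL A -> QL (Imp A B) -> QL B) /\
  (forall B A, QL (Imp (flift B) A) -> QL (Imp B (All A))) /\
  (forall A B, QL (Imp A (flift B)) -> QL (Imp (Ex A) B)).

Definition Critical (F : form) : Prop :=
  exists A t, F = Imp (inst0 t A) (inst0 (Eps A) A) \/
              F = Imp (inst0 (Tau A) A) (inst0 t A).

Fixpoint pinst (s : nat -> form) (p : pform) : form :=
  match p with
  | PVar n => s n
  | PBot => Bot
  | PNeg a => Neg (pinst s a)
  | PAnd a b => And (pinst s a) (pinst s b)
  | POr a b => Or (pinst s a) (pinst s b)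
  | PImp a b => Imp (pinst s a) (pinst s b)
  end.

Inductive ETL (L : pform -> Prop) : form -> Prop :=
| etl_inst s p : (forall n, fqf (s n)) -> L p -> ETL L (pinst s p)
| etl_crit_eps A t : fqf A -> tqf t ->
    ETL L (Imp (inst0 t A) (inst0 (Eps A) A))
| etl_crit_tau A t : fqf A -> tqf t ->
    ETL L (Imp (inst0 (Tau A) A) (inst0 t A))
| etl_mp A B : ETL L A -> ETL L (Imp A B) -> ETL L B.

(* axioms: instances of formulas of QL, obtained by substituting formulas of the
   extended language for predicate symbols and terms of the extended language
   for free variables; plus all critical formulas *)
Definition QLinst (QL : form -> Prop) (F : form) : Prop :=
  exists G sg rho, QL G /\ F = fsubst rho (fpsub sg 0 G).

Definition ETplus (QL : form -> Prop) (F : form) : Prop :=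
  HDer (fun G => QLinst QL G \/ Critical G) F.

Fixpoint et (A : form) : form :=
  match A with
  | Atom p ts => Atom p ts
  | Bot => Bot
  | Neg B => Neg (et B)
  | And B C => And (et B) (et C)
  | Or B C => Or (et B) (et C)
  | Imp B C => Imp (et B) (et C)
  | All B => let b := et B in inst0 (Tau b) b
  | Ex B => let b := et B in inst0 (Eps b) b
  end.

(* A = A(x) with x the de Bruijn index 0; B occurs under the binder of x only
   as flift B, so x is not free in B. *)
Definition CD (A B : form) : form :=
  Imp (All (Or A (flift B))) (Or (All A) B).
Definition QEx (A B : form) : form :=
  Imp (Imp B (Ex A)) (Ex (Imp (flift B) A)).
Definition QAll (A B : form) : form :=
  Imp (Imp (All A) B) (Ex (Imp A (flift B))).

(* Main.v *)
Require Import Defs.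
From Stdlib Require Import List Arith Lia.
Import ListNotations.

Fixpoint tf_ind_t (P : term -> Prop) (Q : form -> Prop)
  (HVar : forall n, P (Var n))
  (HFn : forall f ts, Forall P ts -> P (Fn f ts))
  (HEps : forall A, Q A -> P (Eps A))
  (HTau : forall A, Q A -> P (Tau A))
  (HAtom : forall p ts, Forall P ts -> Q (Atom p ts))
  (HBot : Q Bot)
  (HNeg : forall A, Q A -> Q (Neg A))
  (HAnd : forall A B, Q A -> Q B -> Q (And A B))
  (HOr : forall A B, Q A -> Q B -> Q (Or A B))
  (HImp : forall A B, Q A -> Q B -> Q (Imp A B))
  (HAll : forall A, Q A -> Q (All A))
  (HEx : forall A, Q A -> Q (Ex A)) (t : term) {struct t} : P t :=
  match t with
  | Var n => HVar n
  | Fn f ts => HFn f ts ((fix go (l : list term) : Forall P l :=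
       match l with [] => Forall_nil _
       | u :: l' => Forall_cons _ (tf_ind_t P Q HVar HFn HEps HTau HAtom HBot HNeg HAnd HOr HImp HAll HEx u) (go l') end) ts)
  | Eps A => HEps A (tf_ind_f P Q HVar HFn HEps HTau HAtom HBot HNeg HAnd HOr HImp HAll HEx A)
  | Tau A => HTau A (tf_ind_f P Q HVar HFn HEps HTau HAtom HBot HNeg HAnd HOr HImp HAll HEx A)
  end
with tf_ind_f (P : term -> Prop) (Q : form -> Prop)
  (HVar : forall n, P (Var n))
  (HFn : forall f ts, Forall P ts -> P (Fn f ts))
  (HEps : forall A, Q A -> P (Eps A))
  (HTau : forall A, Q A -> P (Tau A))
  (HAtom : forall p ts, Forall P ts -> Q (Atom p ts))
  (HBot : Q Bot)
  (HNeg : forall A, Q A -> Q (Neg A))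
  (HAnd : forall A B, Q A -> Q B -> Q (And A B))
  (HOr : forall A B, Q A -> Q B -> Q (Or A B))
  (HImp : forall A B, Q A -> Q B -> Q (Imp A B))
  (HAll : forall A, Q A -> Q (All A))
  (HEx : forall A, Q A -> Q (Ex A)) (A : form) {struct A} : Q A :=
  match A with
  | Atom p ts => HAtom p ts ((fix go (l : list term) : Forall P l :=
       match l with [] => Forall_nil _
       | u :: l' => Forall_cons _ (tf_ind_t P Q HVar HFn HEps HTau HAtom HBot HNeg HAnd HOr HImp HAll HEx u) (go l') end) ts)
  | Bot => HBot
  | Neg B => HNeg B (tf_ind_f P Q HVar HFn HEps HTau HAtom HBot HNeg HAnd HOr HImp HAll HEx B)
  | And B C => HAnd B C (tf_ind_f P Q HVar HFn HEps HTau HAtom HBot HNeg HAnd HOr HImp HAll HEx B) (tf_ind_f P Q HVar HFn HEps HTau HAtom HBot HNeg HAnd HOr HImp HAll HEx C)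
  | Or B C => HOr B C (tf_ind_f P Q HVar HFn HEps HTau HAtom HBot HNeg HAnd HOr HImp HAll HEx B) (tf_ind_f P Q HVar HFn HEps HTau HAtom HBot HNeg HAnd HOr HImp HAll HEx C)
  | Imp B C => HImp B C (tf_ind_f P Q HVar HFn HEps HTau HAtom HBot HNeg HAnd HOr HImp HAll HEx B) (tf_ind_f P Q HVar HFn HEps HTau HAtom HBot HNeg HAnd HOr HImp HAll HEx C)
  | All B => HAll B (tf_ind_f P Q HVar HFn HEps HTau HAtom HBot HNeg HAnd HOr HImp HAll HEx B)
  | Ex B => HEx B (tf_ind_f P Q HVar HFn HEps HTau HAtom HBot HNeg HAnd HOr HImp HAll HEx B)
  end.

Ltac tf_go P Q := apply (tf_ind_f P Q) || apply (tf_ind_t P Q).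

Ltac lst IH := f_equal; rewrite ?map_map; apply map_ext_Forall;
  eapply Forall_impl; [|exact IH]; simpl; intros; eauto.

Lemma ren_ext_both :
  (forall t xi ze, (forall n, xi n = ze n) -> tren xi t = tren ze t) /\
  (forall A xi ze, (forall n, xi n = ze n) -> fren xi A = fren ze A).
Proof.
  assert (U : forall xi ze, (forall n, xi n = ze n) -> forall n, upren xi n = upren ze n)
    by (intros xi ze H [|n]; simpl; auto).
  split; [apply (tf_ind_t (fun t => forall xi ze, (forall n, xi n = ze n) -> tren xi t = tren ze t)
                           (fun A => forall xi ze, (forall n, xi n = ze n) -> fren xi A = fren ze A))
         |apply (tf_ind_f (fun t => forall xi ze, (forall n, xi n = ze n) -> tren xi t = tren ze t)
                           (fun A => forall xi ze, (forall n, xi n = ze n) -> fren xi A = fren ze A))];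
  intros; simpl; try (lst H); try f_equal; eauto.
Qed.

Ltac both P Q := split; [apply (tf_ind_t P Q) | apply (tf_ind_f P Q)].

Definition ren_ext_t := proj1 ren_ext_both.
Definition ren_ext_f := proj2 ren_ext_both.

Lemma subst_ext_both :
  (forall t s r, (forall n, s n = r n) -> tsubst s t = tsubst r t) /\
  (forall A s r, (forall n, s n = r n) -> fsubst s A = fsubst r A).
Proof.
  assert (U : forall s r, (forall n, s n = r n) -> forall n, up s n = up r n)
    by (intros s r H [|n]; simpl; auto; now rewrite H).
  both (fun t => forall s r, (forall n, s n = r n) -> tsubst s t = tsubst r t)
       (fun A => forall s r, (forall n, s n = r n) -> fsubst s A = fsubst r A);
  intros; simpl; try (lst H); try f_equal; eauto.
Qed.
Definition subst_ext_t := proj1 subst_ext_both.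
Definition subst_ext_f := proj2 subst_ext_both.

Lemma ren_ren_both :
  (forall t xi ze, tren xi (tren ze t) = tren (fun n => xi (ze n)) t) /\
  (forall A xi ze, fren xi (fren ze A) = fren (fun n => xi (ze n)) A).
Proof.
  both (fun t => forall xi ze, tren xi (tren ze t) = tren (fun n => xi (ze n)) t)
       (fun A => forall xi ze, fren xi (fren ze A) = fren (fun n => xi (ze n)) A);
  intros; simpl; try (lst H); try f_equal; eauto;
  try (rewrite H; apply ren_ext_f; intros [|n]; reflexivity).
Qed.
Definition ren_ren_t := proj1 ren_ren_both.
Definition ren_ren_f := proj2 ren_ren_both.

Lemma subst_ren_both :
  (forall t s xi, tsubst s (tren xi t) = tsubst (fun n => s (xi n)) t) /\
  (forall A s xi, fsubst s (fren xi A) = fsubst (fun n => s (xi n)) A).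
Proof.
  both (fun t => forall s xi, tsubst s (tren xi t) = tsubst (fun n => s (xi n)) t)
       (fun A => forall s xi, fsubst s (fren xi A) = fsubst (fun n => s (xi n)) A);
  intros; simpl; try (lst H); try f_equal; eauto;
  try (rewrite H; apply subst_ext_f; intros [|n]; reflexivity).
Qed.
Definition subst_ren_t := proj1 subst_ren_both.
Definition subst_ren_f := proj2 subst_ren_both.

Lemma ren_subst_both :
  (forall t s xi, tren xi (tsubst s t) = tsubst (fun n => tren xi (s n)) t) /\
  (forall A s xi, fren xi (fsubst s A) = fsubst (fun n => tren xi (s n)) A).
Proof.
  both (fun t => forall s xi, tren xi (tsubst s t) = tsubst (fun n => tren xi (s n)) t)
       (fun A => forall s xi, fren xi (fsubst s A) = fsubst (fun n => tren xi (s n)) A);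
  intros; simpl; try (lst H); try f_equal; eauto;
  try (rewrite H; apply subst_ext_f; intros [|n]; simpl; [reflexivity|];
       unfold tlift; rewrite !ren_ren_t; apply ren_ext_t; reflexivity).
Qed.
Definition ren_subst_t := proj1 ren_subst_both.
Definition ren_subst_f := proj2 ren_subst_both.

Lemma subst_subst_both :
  (forall t s r, tsubst r (tsubst s t) = tsubst (fun n => tsubst r (s n)) t) /\
  (forall A s r, fsubst r (fsubst s A) = fsubst (fun n => tsubst r (s n)) A).
Proof.
  both (fun t => forall s r, tsubst r (tsubst s t) = tsubst (fun n => tsubst r (s n)) t)
       (fun A => forall s r, fsubst r (fsubst s A) = fsubst (fun n => tsubst r (s n)) A);
  intros; simpl; try (lst H); try f_equal; eauto;
  try (rewrite H; apply subst_ext_f; intros [|n]; simpl; [reflexivity|];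
       unfold tlift; rewrite subst_ren_t, ren_subst_t; apply subst_ext_t; reflexivity).
Qed.
Definition subst_subst_t := proj1 subst_subst_both.
Definition subst_subst_f := proj2 subst_subst_both.

Lemma subst_id_both :
  (forall t s, (forall n, s n = Var n) -> tsubst s t = t) /\
  (forall A s, (forall n, s n = Var n) -> fsubst s A = A).
Proof.
  assert (U : forall s, (forall n, s n = Var n) -> forall n, up s n = Var n)
    by (intros s H [|n]; simpl; auto; now rewrite H).
  both (fun t => forall s, (forall n, s n = Var n) -> tsubst s t = t)
       (fun A => forall s, (forall n, s n = Var n) -> fsubst s A = A);
  intros; simpl; try f_equal; eauto.
  all: rewrite <- (map_id ts) at 2; apply map_ext_Forall;
       eapply Forall_impl; [|exact H]; simpl; intros; eauto.
Qed.
Definition subst_id_t := proj1 subst_id_both.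
Definition subst_id_f := proj2 subst_id_both.

Lemma tqf_Fn f ts : tqf (Fn f ts) <-> Forall tqf ts.
Proof. induction ts; simpl. split; auto. rewrite Forall_cons_iff. simpl in IHts. tauto. Qed.
Lemma fqf_Atom p ts : fqf (Atom p ts) <-> Forall tqf ts.
Proof. induction ts; simpl. split; auto. rewrite Forall_cons_iff. simpl in IHts. tauto. Qed.
Lemma tefree_Fn f ts : tefree (Fn f ts) <-> Forall tefree ts.
Proof. induction ts; simpl. split; auto. rewrite Forall_cons_iff. simpl in IHts. tauto. Qed.
Lemma fefree_Atom p ts : fefree (Atom p ts) <-> Forall tefree ts.
Proof. induction ts; simpl. split; auto. rewrite Forall_cons_iff. simpl in IHts. tauto. Qed.

Ltac qfl := intros; cbn [tren fren tsubst fsubst];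
  match goal with
  | |- tqf (Fn ?f _) => apply (proj2 (tqf_Fn f _));
      match goal with H : tqf (Fn f _) |- _ => apply (proj1 (tqf_Fn f _)) in H end;
      apply Forall_map;
      match goal with IH : Forall (fun _ => forall _, _) _ |- _ =>
      eapply Forall_impl; [|apply Forall_and; [exact IH|eassumption]] end;
      simpl; intros ? [? ?]; eauto
  | |- fqf (Atom ?f _) => apply (proj2 (fqf_Atom f _));
      match goal with H : fqf (Atom f _) |- _ => apply (proj1 (fqf_Atom f _)) in H end;
      apply Forall_map;
      match goal with IH : Forall (fun _ => forall _, _) _ |- _ =>
      eapply Forall_impl; [|apply Forall_and; [exact IH|eassumption]] end;
      simpl; intros ? [? ?]; eauto
  | _ => simpl in *; intuition eauto
  end.

Lemma qf_ren_both :
  (forall t xi, tqf t -> tqf (tren xi t)) /\ (forall A xi, fqf A -> fqf (fren xi A)).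
Proof.
  both (fun t => forall xi, tqf t -> tqf (tren xi t)) (fun A => forall xi, fqf A -> fqf (fren xi A)); qfl.
Qed.

Lemma qf_subst_both :
  (forall t s, (forall n, tqf (s n)) -> tqf t -> tqf (tsubst s t)) /\
  (forall A s, (forall n, tqf (s n)) -> fqf A -> fqf (fsubst s A)).
Proof.
  assert (U : forall s, (forall n, tqf (s n)) -> forall n, tqf (up s n))
    by (intros s H [|n]; simpl; auto; apply (proj1 qf_ren_both); auto).
  both (fun t => forall s, (forall n, tqf (s n)) -> tqf t -> tqf (tsubst s t))
       (fun A => forall s, (forall n, tqf (s n)) -> fqf A -> fqf (fsubst s A)); qfl.
Qed.

Lemma tefree_tqf : forall t, tefree t -> tqf t.
Proof.
  apply (tf_ind_t (fun t => tefree t -> tqf t) (fun _ => True)); intros; auto.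
  - apply (proj2 (tqf_Fn f _)). apply (proj1 (tefree_Fn f _)) in H0. eapply Forall_impl; [|apply Forall_and; [exact H|exact H0]].
    simpl; intros a [h1 h2]; eauto.
  - simpl in H0; contradiction.
  - simpl in H0; contradiction.
Qed.

Lemma fren_inst0 xi t A : fren xi (inst0 t A) = inst0 (tren xi t) (fren (upren xi) A).
Proof.
  unfold inst0. rewrite ren_subst_f, subst_ren_f. apply subst_ext_f. intros [|n]; reflexivity.
Qed.

Lemma inst0_flift t B : inst0 t (flift B) = B.
Proof. unfold inst0, flift. rewrite subst_ren_f. apply subst_id_f. reflexivity. Qed.

Lemma et_fren : forall A xi, et (fren xi A) = fren xi (et A).
Proof.
  induction A; intros; simpl; try rewrite IHA; try rewrite IHA1, IHA2; try reflexivity;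
  rewrite fren_inst0; reflexivity.
Qed.

Lemma fqf_et : forall A, fefree A -> fqf (et A).
Proof.
  induction A; simpl; intros; try tauto.
  - apply (proj2 (fqf_Atom n _)). apply (proj1 (fefree_Atom n _)) in H. eapply Forall_impl; [|exact H]. exact tefree_tqf.
  - apply (proj2 qf_subst_both); auto. intros [|n]; simpl; auto.
  - apply (proj2 qf_subst_both); auto. intros [|n]; simpl; auto.
Qed.

Definition atoms (n : nat) : form := Atom n [].

Lemma fefree_pinst_atoms p : fefree (pinst atoms p).
Proof. induction p; simpl; auto. Qed.

Lemma ipc_iqc p : IPC p -> IQC (pinst atoms p).
Proof.
  intro H; induction H.
  all: try (apply hd_ax; split; [apply (fefree_pinst_atoms (PImp _ _))|]; simpl; constructor).
  exact (hd_mp _ _ _ IHIPC1 IHIPC2).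
Qed.

Lemma fpsub_pinst sg p :
  fpsub sg 0 (pinst atoms p) = pinst (fun n => fsubst (argsub 0 []) (sg n 0)) p.
Proof. induction p; simpl; congruence. Qed.

Lemma fsubst_pinst r s p : fsubst r (pinst s p) = pinst (fun n => fsubst r (s n)) p.
Proof. induction p; simpl; congruence. Qed.

Lemma pinst_ext s s' p : (forall n, s n = s' n) -> pinst s p = pinst s' p.
Proof. intro H; induction p; simpl; congruence. Qed.

Lemma ql_iqc QL : IntermediatePredLogic QL -> forall G, fefree G -> IntAx G -> QL G.
Proof. intros (_ & H & _) G h1 h2. apply H. apply hd_ax. auto. Qed.

Lemma prop_taut QL : IntermediatePredLogic QL -> forall p, IPC p -> forall s, ETplus QL (pinst s p).
Proof.
  intros HQL p Hp s. apply hd_ax. left.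
  exists (pinst atoms p), (fun n _ => s n), Var. split.
  - destruct HQL as (_ & H & _). apply H, ipc_iqc, Hp.
  - rewrite fpsub_pinst, fsubst_pinst. apply pinst_ext. intro n.
    rewrite subst_id_f by reflexivity. symmetry. apply subst_id_f.
    intro m. unfold argsub. simpl. rewrite Nat.sub_0_r, Nat.add_0_r. reflexivity.
Qed.


Definition s3 (X Y Z : form) (n : nat) : form :=
  match n with 0 => X | 1 => Y | _ => Z end.

Lemma hK QL : IntermediatePredLogic QL -> forall X Y, ETplus QL (Imp X (Imp Y X)).
Proof. intros H X Y. exact (prop_taut QL H _ (ipc_k (PVar 0) (PVar 1)) (s3 X Y Y)). Qed.
Lemma hS QL : IntermediatePredLogic QL -> forall X Y Z,
  ETplus QL (Imp (Imp X (Imp Y Z)) (Imp (Imp X Y) (Imp X Z))).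
Proof. intros H X Y Z. exact (prop_taut QL H _ (ipc_s (PVar 0) (PVar 1) (PVar 2)) (s3 X Y Z)). Qed.
Lemma hor1 QL : IntermediatePredLogic QL -> forall X Y, ETplus QL (Imp X (Or X Y)).
Proof. intros H X Y. exact (prop_taut QL H _ (ipc_or1 (PVar 0) (PVar 1)) (s3 X Y Y)). Qed.
Lemma hor2 QL : IntermediatePredLogic QL -> forall X Y, ETplus QL (Imp Y (Or X Y)).
Proof. intros H X Y. exact (prop_taut QL H _ (ipc_or2 (PVar 0) (PVar 1)) (s3 X Y Y)). Qed.
Lemma horE QL : IntermediatePredLogic QL -> forall X Y Z,
  ETplus QL (Imp (Imp X Z) (Imp (Imp Y Z) (Imp (Or X Y) Z))).
Proof. intros H X Y Z. exact (prop_taut QL H _ (ipc_orE (PVar 0) (PVar 1) (PVar 2)) (s3 X Y Z)). Qed.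

Lemma hmp QL X Y : ETplus QL X -> ETplus QL (Imp X Y) -> ETplus QL Y.
Proof. apply hd_mp. Qed.

Lemma hsyll QL : IntermediatePredLogic QL -> forall X Y Z,
  ETplus QL (Imp X Y) -> ETplus QL (Imp Y Z) -> ETplus QL (Imp X Z).
Proof.
  intros H X Y Z f g.
  assert (g' : ETplus QL (Imp X (Imp Y Z))) by (eapply hmp; [exact g| apply hK; auto]).
  eapply hmp; [exact f|]. eapply hmp; [exact g'|]. apply hS; auto.
Qed.

Lemma hpre QL : IntermediatePredLogic QL -> forall X Y B,
  ETplus QL (Imp X Y) -> ETplus QL (Imp (Imp Y B) (Imp X B)).
Proof.
  intros H X Y B f.
  assert (h : ETplus QL (Imp (Imp Y B) (Imp (Imp X Y) (Imp X B)))).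
  { eapply hsyll; [auto | apply (hK QL H _ X) | apply hS; auto]. }
  assert (h2 : ETplus QL (Imp (Imp Y B) (Imp X Y))) by (eapply hmp; [exact f|apply hK; auto]).
  eapply hmp; [exact h2|]. eapply hmp; [exact h|]. apply hS; auto.
Qed.

Lemma hpost QL : IntermediatePredLogic QL -> forall X Y B,
  ETplus QL (Imp X Y) -> ETplus QL (Imp (Imp B X) (Imp B Y)).
Proof.
  intros H X Y B f.
  assert (h : ETplus QL (Imp B (Imp X Y))) by (eapply hmp; [exact f|apply hK; auto]).
  eapply hmp; [exact h|]. apply hS; auto.
Qed.

Lemma Q1 QL : IntermediatePredLogic QL -> forall A t, ETplus QL (Imp (All A) (inst0 t A)).
Proof.
  intros HQL A t. apply hd_ax. left.
  exists (Imp (All (Atom 0 [Var 0])) (Atom 0 [Var 0])), (fun _ _ => fren (upren S) A), (scons0 t).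
  split.
  - apply ql_iqc; auto. simpl; auto. exact (ax_all (Atom 0 [Var 0]) (Var 0)).
  - cbn [fpsub fsubst tpsub map length]. f_equal; [f_equal|].
    + rewrite subst_subst_f, subst_ren_f. symmetry. apply subst_id_f.
      intros [|m]; unfold argsub; simpl; try reflexivity. rewrite Nat.add_1_r. reflexivity.
    + rewrite subst_subst_f, subst_ren_f. unfold inst0. apply subst_ext_f.
      intros [|m]; unfold argsub; simpl; try reflexivity. rewrite Nat.add_0_r. reflexivity.
Qed.

Lemma Q2 QL : IntermediatePredLogic QL -> forall A t, ETplus QL (Imp (inst0 t A) (Ex A)).
Proof.
  intros HQL A t. apply hd_ax. left.
  exists (Imp (Atom 0 [Var 0]) (Ex (Atom 0 [Var 0]))), (fun _ _ => fren (upren S) A), (scons0 t).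
  split.
  - apply ql_iqc; auto. simpl; auto. exact (ax_ex (Atom 0 [Var 0]) (Var 0)).
  - cbn [fpsub fsubst tpsub map length]. f_equal; [|f_equal].
    + rewrite subst_subst_f, subst_ren_f. unfold inst0. apply subst_ext_f.
      intros [|m]; unfold argsub; simpl; try reflexivity. rewrite Nat.add_0_r. reflexivity.
    + rewrite subst_subst_f, subst_ren_f. symmetry. apply subst_id_f.
      intros [|m]; unfold argsub; simpl; try reflexivity. rewrite Nat.add_1_r. reflexivity.
Qed.

Lemma inst0_var0_lift A : inst0 (Var 0) (fren (upren S) A) = A.
Proof. unfold inst0. rewrite subst_ren_f. apply subst_id_f. intros [|m]; reflexivity. Qed.

Lemma Q3 QL A : ETplus QL (Imp (inst0 (Tau A) A) (All A)).
Proof.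
  apply hd_all. unfold flift.
  assert (E : Imp (fren S (inst0 (Tau A) A)) A = Imp (inst0 (Tau (fren (upren S) A)) (fren (upren S) A)) (inst0 (Var 0) (fren (upren S) A)))
    by (rewrite fren_inst0, inst0_var0_lift; reflexivity).
  rewrite E.
  apply hd_ax. right. exists (fren (upren S) A), (Var 0). right. reflexivity.
Qed.

Lemma Q4 QL A : ETplus QL (Imp (Ex A) (inst0 (Eps A) A)).
Proof.
  apply hd_ex. unfold flift.
  assert (E : Imp A (fren S (inst0 (Eps A) A)) = Imp (inst0 (Var 0) (fren (upren S) A)) (inst0 (Eps (fren (upren S) A)) (fren (upren S) A)))
    by (rewrite fren_inst0, inst0_var0_lift; reflexivity).
  rewrite E.
  apply hd_ax. right. exists (fren (upren S) A), (Var 0). left. reflexivity.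
Qed.

Lemma inst0_Or t X Y : inst0 t (Or X Y) = Or (inst0 t X) (inst0 t Y).
Proof. reflexivity. Qed.
Lemma inst0_Imp t X Y : inst0 t (Imp X Y) = Imp (inst0 t X) (inst0 t Y).
Proof. reflexivity. Qed.

Lemma part2 QL : IntermediatePredLogic QL -> forall A B,
  ETplus QL (CD A B) /\ ETplus QL (QEx A B) /\ ETplus QL (QAll A B).
Proof.
  intros H A B. unfold CD, QEx, QAll. split; [|split].
  - pose proof (Q1 QL H (Or A (flift B)) (Tau A)) as h1.
    rewrite inst0_Or, inst0_flift in h1.
    pose proof (Q3 QL A) as h2.
    assert (h3 := hsyll QL H _ _ _ h2 (hor1 QL H (All A) B)).
    assert (h4 := hor2 QL H (All A) B).
    assert (h5 := hmp _ _ _ h4 (hmp _ _ _ h3 (horE QL H _ _ _))).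
    exact (hsyll QL H _ _ _ h1 h5).
  - assert (h1 := hpost QL H _ _ B (Q4 QL A)).
    pose proof (Q2 QL H (Imp (flift B) A) (Eps A)) as h2.
    rewrite inst0_Imp, inst0_flift in h2.
    exact (hsyll QL H _ _ _ h1 h2).
  - assert (h1 := hpre QL H _ _ B (Q3 QL A)).
    pose proof (Q2 QL H (Imp A (flift B)) (Tau A)) as h2.
    rewrite inst0_Imp, inst0_flift in h2.
    exact (hsyll QL H _ _ _ h1 h2).
Qed.
Lemma fqf_flift b : fqf b -> fqf (flift b).
Proof. apply (proj2 qf_ren_both). Qed.

Lemma part1 L A B : fefree A -> fefree B ->
  ETL L (et (CD A B)) /\ ETL L (et (QEx A B)) /\ ETL L (et (QAll A B)).
Proof.
  intros HA HB. pose proof (fqf_et A HA) as Ha. pose proof (fqf_et B HB) as Hb.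
  pose proof (fqf_flift _ Hb) as Hb'.
  unfold CD, QEx, QAll. cbn [et]. unfold flift. repeat rewrite et_fren. fold (flift (et B)).
  set (a := et A) in *. set (b := et B) in *.
  split; [|split].
  - pose proof (etl_crit_tau L (Or a (flift b)) (Tau a)) as H.
    repeat rewrite inst0_Or in H; repeat rewrite inst0_flift in H; repeat rewrite inst0_Or; repeat rewrite inst0_flift. apply H; simpl; auto.
  - pose proof (etl_crit_eps L (Imp (flift b) a) (Eps a)) as H.
    repeat rewrite inst0_Imp in H; repeat rewrite inst0_flift in H; repeat rewrite inst0_Imp; repeat rewrite inst0_flift. apply H; simpl; auto.
  - pose proof (etl_crit_eps L (Imp a (flift b)) (Tau a)) as H.
    repeat rewrite inst0_Imp in H; repeat rewrite inst0_flift in H; repeat rewrite inst0_Imp; repeat rewrite inst0_flift. apply H; simpl; auto.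
Qed.


Theorem mainTheorem1 (L : pform -> Prop) (QL : form -> Prop) :
  IntermediatePropLogic L -> IntermediatePredLogic QL ->
  (forall A B : form, fefree A -> fefree B ->
     ETL L (et (CD A B)) /\ ETL L (et (QEx A B)) /\ ETL L (et (QAll A B))) /\
  (forall A B : form,
     ETplus QL (CD A B) /\ ETplus QL (QEx A B) /\ ETplus QL (QAll A B)).
Proof.
  intros _ HQL. split.
  - intros A B; apply part1.
  - apply part2; exact HQL.
Qed.
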